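(* Let $(X,b)$ be a locally finite weighted graph, $F$ a Hermitian vector bundle over $X$, $\Phi$ a connection on $F$, $W$ a self-adjoint bundle endomorphism, and $\mathcal M=\mathcal M_{b,\Phi,W}\colon\Gamma(X;F)\to\Gamma(X;F)$. Then $\mathcal M$ is continuous and, identifying the continuous dual of $\Gamma(X;F)$ with $\Gamma_c(X;F)$ via the pairing $(\varphi,f)=\sum_x\langle\varphi(x),f(x)\rangle_x$, the dual operator of $\mathcal M$ is $\mathcal M|_{\Gamma_c(X;F)}$. In particular, $\mathcal M$ is surjective if and only if $\mathcal M|_{\Gamma_c(X;F)}$ is injective.
   Context: Weighted graph: $X$ countable, $b\colon X\times X\to[0,\infty)$ with $b(x,x)=0$, $b(x,y)=b(y,x)$, $\sum_y b(x,y)<\infty$; locally finite means each $x$ has only finitely many $y$ with $b(x,y)>0$. Hermitian vector bundle: family $F=(F_x)$ of finite-dimensional complex inner product spaces $\langle\cdot,\cdot\rangle_x$ (linear in second variable); $\Gamma(X;F)=\prod_xF_x$ with the product topology; $\Gamma_c(X;F)$ its finitely supported elements. Connection: unitary $\Phi_{xy}\colon F_y\to F_x$ with $\Phi_{yx}=\Phi_{xy}^{-1}$. Self-adjoint bundle endomorphism: self-adjoint $W(x)\colon F_x\to F_x$. $\mathcal M f(x)=\sum_y b(x,y)(f(x)-\Phi_{xy}f(y))+W(x)f(x)$. The dual operator $\mathcal M'$ on $\Gamma_c(X;F)$ is defined by $(\mathcal M'\varphi,f)=(\varphi,\mathcal Mf)$ for all $f\in\Gamma(X;F)$. *)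

(* Defs.v *)
From HB Require Import structures.
From mathcomp Require Import all_boot all_order all_algebra.
From mathcomp Require Import complex.
From mathcomp Require Import all_classical all_reals all_analysis.
Import Order.TTheory GRing.Theory Num.Theory.
Import numFieldNormedType.Exports.

Set Implicit Arguments.
Unset Strict Implicit.
Unset Printing Implicit Defensive.

Local Open Scope ring_scope.
Local Open Scope classical_set_scope.

(* The usual (metric) topology on C = R[i], induced by its norm. *)
HB.instance Definition _ (R : rcfType) := PseudoPointedMetric.copy R[i] (R[i])^o.

Section Bundles.
Variables (R : realType) (X : countType) (n : X -> nat).

(* Fibre F_x = C^(n x) with the standard Hermitian inner product. *)
Definition fibre (x : X) : Type := 'cV[R[i]]_(n x).

Definition Gamma : topologicalType := prod_topology fibre.

Definition hdot (k : nat) (u v : 'cV[R[i]]_k) : R[i] :=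
  \sum_(i < k) (u i 0)^* * v i 0.

Definition adjmx (p q : nat) (A : 'M[R[i]]_(p, q)) : 'M[R[i]]_(q, p) :=
  (map_mx Num.conj A)^T.

Definition weighted_graph (b : X -> X -> R) : Prop :=
  (forall x y, 0 <= b x y) /\ (forall x, b x x = 0) /\
  (forall x y, b x y = b y x).

Definition locally_finite (b : X -> X -> R) : Prop :=
  forall x, finite_set [set y | 0 < b x y].

Definition connection (Phi : forall x y : X, 'M[R[i]]_(n x, n y)) : Prop :=
  forall x y,
    (adjmx (Phi x y) *m Phi x y = 1%:M /\ Phi x y *m adjmx (Phi x y) = 1%:M) /\
    (Phi y x *m Phi x y = 1%:M /\ Phi x y *m Phi y x = 1%:M).

Definition selfadjoint_endo (W : forall x : X, 'M[R[i]]_(n x)) : Prop :=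
  forall x, adjmx (W x) = W x.

(* M f (x) = sum_y b(x,y) (f(x) - Phi_xy f(y)) + W(x) f(x).
   The sum is a finitely supported sum (fsbig); for a locally finite graph
   the summand has finite support, so this is the (finite) series. *)
Definition Mop (b : X -> X -> R) (Phi : forall x y : X, 'M[R[i]]_(n x, n y))
  (W : forall x : X, 'M[R[i]]_(n x)) (f : Gamma) : Gamma :=
  fun x => \sum_(y \in [set: X]) ((b x y)%:C%C *: (f x - Phi x y *m f y))
           + W x *m f x.

Definition fin_supp (f : Gamma) : Prop := finite_set [set x | f x != 0].

Definition pairing (phi f : Gamma) : R[i] :=
  \sum_(x \in [set: X]) hdot (phi x) (f x).

End Bundles.

(* Main.v *)
Require Import Defs.
From HB Require Import structures.
From mathcomp Require Import all_boot all_order all_algebra.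
From mathcomp Require Import complex.
From mathcomp Require Import all_classical all_reals all_analysis.
Import Order.TTheory GRing.Theory Num.Theory.
Import numFieldNormedType.Exports.
Local Open Scope ring_scope.
Local Open Scope classical_set_scope.

Lemma fsumT (T : choiceType) (V : nmodType) (r : seq T) (F : T -> V) :
  uniq r -> (forall i, i \notin r -> F i = 0) ->
  \sum_(i \in [set: T]) F i = \sum_(i <- r) F i.
Proof.
move=> ur F0; rewrite (fsbigE r) //; last by move=> i _; exact: F0.
by apply: eq_bigl => i; rewrite in_setT.
Qed.

Section Cont.
Variable R : realType.
Local Notation K := (R[i]).

Lemma contD (T : topologicalType) (g h : T -> K) : continuous g -> continuous h ->
  continuous (fun t => g t + h t).
Proof. move=> cg ch t; apply: (@cvgD _ (R[i]^o)); [exact: cg | exact: ch]. Qed.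

Lemma contM (T : topologicalType) (c : K) (g : T -> K) : continuous g ->
  continuous (fun t => c * g t).
Proof. move=> cg t; apply: (@cvgMl_tmp (R[i])); exact: cg. Qed.

Lemma contC (T : topologicalType) (c : K) : continuous (fun _ : T => c).
Proof. move=> t; exact: cvg_cst. Qed.

Lemma contS (T : topologicalType) (I : Type) (r : seq I) (g : I -> T -> K) :
  (forall i, continuous (g i)) -> continuous (fun t => \sum_(i <- r) g i t).
Proof.
move=> cg; elim: r => [|i r IH].
  under eq_fun do rewrite big_nil. exact: contC.
under eq_fun do rewrite big_cons. exact: contD.
Qed.

Lemma mx_cont (T : topologicalType) m k (h : T -> 'M[K]_(m,k)) :
  (forall a b, continuous (fun t => h t a b)) -> continuous h.
Proof.
move=> ch t A [P hP sPA].
apply: (filterS (fun t' (H : forall ab : 'I_m * 'I_k, P ab.1 ab.2 (h t' ab.1 ab.2)) => sPA _ (fun a b => H (a, b)))).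
apply: filter_forall => -[a b] /=.
exact: (ch a b t _ (hP a b)).
Qed.

Lemma entry_cont m k (a : 'I_m) (b : 'I_k) : continuous (fun M : 'M[K]_(m,k) => M a b).
Proof.
move=> M A MA.
exists (fun i j => if (i == a) && (j == b) then A else setT).
  by move=> i j; case: ifP => [/andP[/eqP-> /eqP->]//|_]; exact: filterT.
by move=> N HN; have := HN a b; rewrite !eqxx.
Qed.

Lemma prod_cont (T : topologicalType) (X : countType) (n : X -> nat) (h : T -> Gamma R n) :
  (forall x, continuous (fun t => h t x)) -> continuous h.
Proof.
move=> ch t.
apply/cvg_sup => x A.
rewrite nbhsE => -[B [[C oC <-] Ct] sBA].
have NC : nbhs (h t x) C by apply: open_nbhs_nbhs; split.
exact: (filterS (fun t' (H : C (h t' x)) => sBA _ H) (ch x t C NC)).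
Qed.

Lemma proj_cont (X : countType) (n : X -> nat) (x : X) : continuous (fun f : Gamma R n => f x).
Proof. exact: (@proj_continuous X (fibre R n) x). Qed.

Lemma comp_cont (S T U : topologicalType) (f : S -> T) (g : T -> U) :
  continuous f -> continuous g -> continuous (fun t => g (f t)).
Proof. by move=> cf cg t; exact: (continuous_comp (cf t) (cg (f t))). Qed.

Lemma ent_cont (T : topologicalType) m k (h : T -> 'M[K]_(m,k)) a b :
  continuous h -> continuous (fun t => h t a b).
Proof. move=> ch. exact: (@comp_cont T _ _ h (fun M : 'M[K]_(m,k) => M a b) ch (@entry_cont m k a b)). Qed.

Lemma mcontD (T : topologicalType) m k (g h : T -> 'M[K]_(m,k)) : continuous g -> continuous h ->
  continuous (fun t => g t + h t).
Proof.
move=> cg ch; apply: mx_cont => a b.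
under eq_fun do rewrite mxE.
by apply: contD; apply: ent_cont.
Qed.

Lemma mcontN (T : topologicalType) m k (g : T -> 'M[K]_(m,k)) : continuous g ->
  continuous (fun t => - g t).
Proof.
move=> cg; apply: mx_cont => a b.
under eq_fun do rewrite mxE -mulN1r.
by apply: contM; apply: ent_cont.
Qed.

Lemma mcontZ (T : topologicalType) m k c (g : T -> 'M[K]_(m,k)) : continuous g ->
  continuous (fun t => c *: g t).
Proof.
move=> cg; apply: mx_cont => a b.
under eq_fun do rewrite mxE.
by apply: contM; apply: ent_cont.
Qed.

Lemma mcontMl (T : topologicalType) m k p (A : 'M[K]_(m,k)) (g : T -> 'M[K]_(k,p)) : continuous g ->
  continuous (fun t => A *m g t).
Proof.
move=> cg; apply: mx_cont => a b.
under eq_fun do rewrite mxE.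
by apply: contS => j; apply: contM; apply: ent_cont.
Qed.

Lemma mcontS (T : topologicalType) m k (I : Type) (r : seq I) (g : I -> T -> 'M[K]_(m,k)) :
  (forall i, continuous (g i)) -> continuous (fun t => \sum_(i <- r) g i t).
Proof.
move=> cg; apply: mx_cont => a b.
under eq_fun do rewrite summxE.
by apply: contS => j; apply: ent_cont.
Qed.
End Cont.

Section Hdot.
Variable R : realType.
Local Notation K := (R[i]).
Implicit Types (k : nat).

Lemma hdotDl k (u v w : 'cV[K]_k) : hdot (u + v) w = hdot u w + hdot v w.
Proof. by rewrite /hdot -big_split; apply: eq_bigr => i _; rewrite mxE rmorphD mulrDl. Qed.

Lemma hdotDr k (u v w : 'cV[K]_k) : hdot u (v + w) = hdot u v + hdot u w.
Proof. by rewrite /hdot -big_split; apply: eq_bigr => i _; rewrite mxE mulrDr. Qed.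

Lemma hdotZl k c (u w : 'cV[K]_k) : hdot (c *: u) w = Num.conj c * hdot u w.
Proof. by rewrite /hdot mulr_sumr; apply: eq_bigr => i _; rewrite mxE rmorphM mulrA. Qed.

Lemma hdotZr k c (u w : 'cV[K]_k) : hdot u (c *: w) = c * hdot u w.
Proof. by rewrite /hdot mulr_sumr; apply: eq_bigr => i _; rewrite mxE mulrCA. Qed.

Lemma hdot0l k (w : 'cV[K]_k) : hdot 0 w = 0.
Proof. by rewrite /hdot big1 // => i _; rewrite mxE rmorph0 mul0r. Qed.

Lemma hdot0r k (w : 'cV[K]_k) : hdot w 0 = 0.
Proof. by rewrite /hdot big1 // => i _; rewrite mxE mulr0. Qed.

Lemma hdotNl k (u w : 'cV[K]_k) : hdot (- u) w = - hdot u w.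
Proof. by rewrite -scaleN1r hdotZl rmorphN1 mulN1r. Qed.

Lemma hdotNr k (u w : 'cV[K]_k) : hdot u (- w) = - hdot u w.
Proof. by rewrite -scaleN1r hdotZr mulN1r. Qed.

Lemma hdotBl k (u v w : 'cV[K]_k) : hdot (u - v) w = hdot u w - hdot v w.
Proof. by rewrite hdotDl hdotNl. Qed.

Lemma hdotBr k (u v w : 'cV[K]_k) : hdot u (v - w) = hdot u v - hdot u w.
Proof. by rewrite hdotDr hdotNr. Qed.

Lemma hdot_suml k (I : Type) (r : seq I) (F : I -> 'cV[K]_k) w :
  hdot (\sum_(i <- r) F i) w = \sum_(i <- r) hdot (F i) w.
Proof.
elim: r => [|j r IH]; first by rewrite !big_nil hdot0l.
by rewrite !big_cons hdotDl IH.
Qed.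

Lemma hdot_sumr k (I : Type) (r : seq I) (F : I -> 'cV[K]_k) w :
  hdot w (\sum_(i <- r) F i) = \sum_(i <- r) hdot w (F i).
Proof.
elim: r => [|j r IH]; first by rewrite !big_nil hdot0r.
by rewrite !big_cons hdotDr IH.
Qed.

Lemma hdotMl k p (A : 'M[K]_(k, p)) (u : 'cV[K]_p) (v : 'cV[K]_k) :
  hdot (A *m u) v = hdot u (adjmx A *m v).
Proof.
rewrite /hdot.
under eq_bigr do rewrite mxE rmorph_sum mulr_suml.
rewrite exchange_big /=; apply: eq_bigr => j _.
rewrite mxE mulr_sumr; apply: eq_bigr => i _.
by rewrite /adjmx !mxE rmorphM mulrA [X in X * _ = _]mulrC.
Qed.

Lemma hdot_ge0 k (u : 'cV[K]_k) : 0 <= hdot u u.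
Proof. by apply: sumr_ge0 => i _; rewrite mulrC mul_conjC_ge0. Qed.

Lemma hdot_eq0 k (u : 'cV[K]_k) : hdot u u = 0 -> u = 0.
Proof.
move=> H; apply/matrixP => i j; rewrite (ord1 j) mxE.
have H0 : forall i0 : 'I_k, true -> 0 <= Num.conj (u i0 0) * u i0 0.
  by move=> i0 _; rewrite mulrC mul_conjC_ge0.
have /eqP := @psumr_eq0P _ _ _ _ H0 H i isT.
by rewrite mulrC mul_conjC_eq0 => /eqP.
Qed.
End Hdot.

Section Abstract.
Variables (K : fieldType) (C : countType) (E : eqType).
Variable lam : E -> (C -> K) -> K.
Hypothesis lin : forall e u v s, lam e (fun c => u c + s * v c) = lam e u + s * lam e v.
Hypothesis loc : forall e, exists D : seq C, forall u v,
  (forall c, c \in D -> u c = v c) -> lam e u = lam e v.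
Hypothesis nondeg : forall es : seq E, uniq es -> forall cf : E -> K,
  (forall u, \sum_(e <- es) cf e * lam e u = 0) -> forall e, e \in es -> cf e = 0.

Lemma lam0 e : lam e (fun _ => 0) = 0.
Proof.
have := lin e (fun _ => 0) (fun _ => 0) 1.
have -> : (fun _ : C => (0:K) + 1 * 0) = (fun _ => 0) by apply: funext => c; rewrite mulr0 addr0.
by move/(congr1 (fun x => x - lam e (fun _ => 0))); rewrite mul1r subrr addrK.
Qed.

Lemma lamZ e s v : lam e (fun c => s * v c) = s * lam e v.
Proof.
have := lin e (fun _ => 0) v s.
have -> : (fun c => (0:K) + s * v c) = (fun c => s * v c) by apply: funext => c; rewrite add0r.
by rewrite lam0 add0r.
Qed.

Lemma lamB e u v : lam e (fun c => u c - v c) = lam e u - lam e v.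
Proof.
have := lin e u v (-1).
have -> : (fun c => u c + -1 * v c) = (fun c => u c - v c) by apply: funext => c; rewrite mulN1r.
by rewrite mulN1r.
Qed.

Lemma lamsum e u (r : seq E) (a : E -> K) (v : E -> C -> K) :
  lam e (fun c => u c + \sum_(j <- r) a j * v j c) = lam e u + \sum_(j <- r) a j * lam e (v j).
Proof.
elim: r => [|j r IH].
  rewrite big_nil addr0; congr (lam e _); apply: funext => c; by rewrite big_nil addr0.
have -> : (fun c => u c + \sum_(j0 <- j :: r) a j0 * v j0 c) =
   (fun c => (u c + \sum_(j0 <- r) a j0 * v j0 c) + a j * v j c).
  by apply: funext => c; rewrite big_cons addrA addrAC.
by rewrite lin IH big_cons addrA addrAC.
Qed.

Lemma FL (es : seq E) : uniq es ->
  (forall g : E -> K, exists u, forall e, e \in es -> lam e u = g e) \/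
  (exists cf : E -> K, (exists2 e, e \in es & cf e != 0) /\
     forall u, \sum_(e <- es) cf e * lam e u = 0).
Proof.
elim: es => [_|e es IH /= /andP[nees ues]].
  by left => g; exists (fun _ => 0) => e.
case: (IH ues) => [surj|[cf [[e0 e0es cf0] cfs]]]; last first.
  right; exists (fun e' => if e' == e then 0 else cf e'); split.
    exists e0; first by rewrite inE e0es orbT.
    by case: (e0 =P e) => [E0|//]; rewrite -E0 e0es in nees.
  move=> u; rewrite big_cons eqxx mul0r add0r -[RHS](cfs u).
  rewrite big_seq [RHS]big_seq; apply: eq_bigr => e' e'es.
  by case: (e' =P e) => [E0|//]; rewrite -E0 e'es in nees.
case: (pselect (exists h, (forall e', e' \in es -> lam e' h = 0) /\ lam e h != 0)).
  move=> [h [h0 he]]; left => g.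
  have [u0 Hu0] := surj g.
  exists (fun c => u0 c + (g e - lam e u0) / lam e h * h c) => e'.
  rewrite inE lin => /orP[/eqP->|e'es].
    by rewrite divfK // addrC subrK.
  by rewrite (h0 e') // mulr0 addr0 Hu0.
move=> nh.
have nh' : forall h, (forall e', e' \in es -> lam e' h = 0) -> lam e h = 0.
  move=> h H; apply/eqP; apply: contraT => H2; case: nh; exists h; split => //.
have [vb Hvb] := choice (fun e1 => surj (fun e' => (e' == e1)%:R)).
right; exists (fun e' => if e' == e then -1 else lam e (vb e')); split.
  by exists e; rewrite ?inE ?eqxx // oppr_eq0 oner_eq0.
move=> u; rewrite big_cons eqxx.
have -> : \sum_(j <- es) (if j == e then -1 else lam e (vb j)) * lam j u =
          \sum_(j <- es) lam j u * lam e (vb j).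
  rewrite big_seq [RHS]big_seq; apply: eq_bigr => e' e'es.
  case: eqP => [?|_]; last by rewrite mulrC.
  by subst e'; rewrite e'es in nees.
have H : lam e (fun c => u c + \sum_(j <- es) (- lam j u) * vb j c) = 0.
  apply: nh' => e' e'es; rewrite lamsum (bigD1_seq e') //= Hvb // eqxx mulr1.
  rewrite big1 ?addr0 ?subrr // => j /negbTE nj.
  by rewrite Hvb // eq_sym nj mulr0.
move: H; rewrite lamsum; under eq_bigr do rewrite mulNr.
by rewrite sumrN => /subr0_eq ->; rewrite mulN1r addNr.
Qed.

Lemma finsolve (F : seq E) (g : E -> K) : exists u, forall e, e \in F -> lam e u = g e.
Proof.
case: (@FL (undup F) (undup_uniq F)) => [surj|[cf [[e0 e0F cf0] cfs]]].
  by have [u Hu] := surj g; exists u => e eF; apply: Hu; rewrite mem_undup.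
by rewrite (@nondeg (undup F) (undup_uniq F) _ cfs e0 e0F) eqxx in cf0.
Qed.

Variable g : E -> K.

Definition MLgood (L : seq C) (h : C -> K) := forall F : seq E, exists u,
  (forall e, e \in F -> lam e u = g e) /\ (forall c, c \in L -> u c = h c).

Lemma MLstep L h : MLgood L h -> forall c, exists h',
  (forall c', c' \in L -> h' c' = h c') /\ MLgood (c :: L) h'.
Proof.
move=> gd c.
case: (pselect (exists (F0 : seq E) (p : K), forall u : C -> K, (forall e, e \in F0 -> lam e u = g e) ->
   (forall c', c' \in L -> u c' = h c') -> u c = p)).
  move=> [F0 [p HF0]].
  have [u0 [s0 a0]] := gd F0.
  exists u0; split => // F.
  have [u [su au]] := gd (F ++ F0).
  exists u; split.
    by move=> e eF; apply: su; rewrite mem_cat eF.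
  move=> c'; rewrite inE => /orP[/eqP->|c'L]; last by rewrite au // a0.
  have su0 : forall e, e \in F0 -> lam e u = g e.
    by move=> e eF0; apply: su; rewrite mem_cat eF0 orbT.
  by rewrite (HF0 u0 s0 a0) (HF0 u su0 au).
move=> nex.
have [u1 [_ a1]] := gd [::].
exists u1; split => // F.
have [u [su au]] := gd F.
have : exists u2, (forall e, e \in F -> lam e u2 = g e) /\
    (forall c', c' \in L -> u2 c' = h c') /\ u2 c != u c.
  case: (pselect (exists u2, (forall e, e \in F -> lam e u2 = g e) /\
    (forall c', c' \in L -> u2 c' = h c') /\ u2 c != u c)) => [//|H].
  exfalso; apply: nex; exists F, (u c) => u2 s2 a2.
  apply/eqP; apply: contraT => n2; case: H; exists u2; split => //.
move=> [u2 [s2 [a2 n2]]].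
set s := (u1 c - u c) / (u2 c - u c).
exists (fun c0 => u c0 + s * (u2 c0 - u c0)); split.
  by move=> e eF; rewrite lin lamB su // s2 // subrr mulr0 addr0.
move=> c'; rewrite inE => /orP[/eqP->|c'L].
  by rewrite /s divfK ?subr_eq0 // addrC subrK.
by rewrite au // a2 // subrr mulr0 addr0 a1.
Qed.

Definition MLnext (L : seq C) (h : C -> K) (c : C) : C -> K :=
  match pselect (MLgood L h) with
  | left H => projT1 (cid (@MLstep L h H c))
  | right _ => h
  end.

Fixpoint Ls (k : nat) : seq C :=
  if k is k'.+1 then
    (if unpickle k' is Some c then c :: Ls k' else Ls k')
  else [::].

Fixpoint hs (k : nat) : C -> K :=
  if k is k'.+1 then
    (if unpickle k' is Some c then MLnext (Ls k') (hs k') c else hs k')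
  else (fun _ => 0).

Lemma hs_good k : MLgood (Ls k) (hs k) /\
  (forall c, c \in Ls k -> hs k.+1 c = hs k c).
Proof.
elim: k => [|k [IH _]].
  split; last by move=> c /=; rewrite in_nil.
  by move=> F; have [u Hu] := finsolve F g; exists u; split => // c; rewrite in_nil.
have MLstep' : forall c, MLgood (c :: Ls k) (MLnext (Ls k) (hs k) c) /\
    (forall c', c' \in Ls k -> MLnext (Ls k) (hs k) c c' = hs k c').
  move=> c; rewrite /MLnext; case: pselect => // H.
  by case: (cid (@MLstep _ _ H c)) => h' [] /= ? ?; split.
have G : MLgood (Ls k.+1) (hs k.+1).
  by rewrite /=; case: (unpickle k) => [c|] //; case: (MLstep' c).
split => // c cL.
rewrite [hs k.+2]/=; case E1: (unpickle k.+1) => [c1|] //.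
rewrite /MLnext; case: pselect => // H.
by case: (cid (@MLstep _ _ H c1)) => h' [] /= ? ?; auto.
Qed.

Lemma Ls_mono k k' : (k <= k')%N -> {subset Ls k <= Ls k'}.
Proof.
move=> /subnK <-; elim: (k' - k)%N => [//|d IH] c /IH.
by rewrite addSn /=; case: (unpickle _) => // c1 H; rewrite inE H orbT.
Qed.

Lemma hs_stable k k' c : (k <= k')%N -> c \in Ls k -> hs k' c = hs k c.
Proof.
move=> /subnK <- cL; elim: (k' - k)%N => [//|d IH].
rewrite addSn (proj2 (hs_good _)) ?IH //.
exact: (@Ls_mono k (d + k) (leq_addl d k) c cL).
Qed.

Lemma Ls_pickle c : c \in Ls (pickle c).+1.
Proof. by rewrite /= pickleK inE eqxx. Qed.

Theorem abstract_surj : exists u, forall e, lam e u = g e.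
Proof.
exists (fun c => hs (pickle c).+1 c) => e.
have [D HD] := loc e.
set N := \max_(c <- D) (pickle c).+1.
have leN : forall c, c \in D -> ((pickle c).+1 <= N)%N.
  by move=> c cD; exact: (@leq_bigmax_seq _ D xpredT (fun c => (pickle c).+1) c cD).
have [u [su au]] := (proj1 (hs_good N)) [:: e].
rewrite -(su e (mem_head _ _)); apply: HD => c cD.
rewrite au; last exact: (@Ls_mono (pickle c).+1 N (leN c cD) c (Ls_pickle c)).
by rewrite (@hs_stable (pickle c).+1 N c (leN c cD) (Ls_pickle c)).
Qed.
End Abstract.

Section Concrete.
Variables (R : realType) (X : countType) (n : X -> nat) (b : X -> X -> R)
  (Phi : forall x y : X, 'M[R[i]]_(n x, n y)) (W : forall x : X, 'M[R[i]]_(n x)).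
Hypotheses (wg : weighted_graph b) (lf : locally_finite b)
  (con : connection Phi) (sa : selfadjoint_endo W).
Local Notation K := (R[i]).
Local Notation G := (Gamma R n).
Local Notation M := (Mop b Phi W).

Definition NS (x : X) : seq X := finmap.enum_fset (fset_set [set y | 0 < b x y]).

Lemma memNS x y : (y \in NS x) = (0 < b x y).
Proof. have := in_fset_set (lf x) y => /= ->. apply/idP/idP; rewrite ?mem_setE ?inE //=. Qed.

Lemma uniqNS x : uniq (NS x).
Proof. exact: finmap.fset_uniq. Qed.

Lemma bNS x y : y \notin NS x -> b x y = 0.
Proof.
rewrite memNS => H; have [b0 _] := wg.
by move: (b0 x y); rewrite le_eqVlt (negbTE H) orbF => /eqP <-.
Qed.

Lemma bsym x y : b x y = b y x.
Proof. by case: wg => _ [_ ->]. Qed.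

Lemma MopE (f : G) x : M f x =
  \sum_(y <- NS x) (b x y)%:C%C *: (f x - Phi x y *m f y) + W x *m f x.
Proof.
rewrite /Mop (@fsumT _ _ (NS x) _ (uniqNS x)) // => y /bNS ->.
by rewrite scale0r.
Qed.

Lemma M_cont : continuous M.
Proof.
apply: prod_cont => x.
under eq_fun do rewrite MopE.
apply: mcontD; last by apply: mcontMl; exact: proj_cont.
apply: mcontS => y; apply: mcontZ; apply: mcontD; first exact: proj_cont.
by apply: mcontN; apply: mcontMl; exact: proj_cont.
Qed.


Lemma adjPhi x y : adjmx (Phi x y) = Phi y x.
Proof.
have [[H1 _] [_ H2]] := con x y.
by rewrite -[adjmx _]mulmx1 -H2 mulmxA H1 mul1mx.
Qed.

Lemma conjb x y : Num.conj ((b x y)%:C%C) = (b x y)%:C%C.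
Proof. by apply: conj_Creal; apply/complex_realP; exists (b x y). Qed.

Lemma c0 : ((0:R)%:C)%C = 0 :> K.
Proof. by []. Qed.

Lemma hdotM_pt (phi f : G) x :
  hdot (M phi x) (f x) = \sum_(y <- NS x) (b x y)%:C%C * hdot (phi x) (f x)
     - \sum_(y <- NS x) (b x y)%:C%C * hdot (phi y) (Phi y x *m f x)
     + hdot (phi x) (W x *m f x).
Proof.
rewrite MopE hdotDl hdot_suml hdotMl sa -sumrB.
congr (_ + _); apply: eq_bigr => y _.
by rewrite hdotZl conjb hdotBl hdotMl adjPhi mulrBr.
Qed.

Lemma hdotM_pt2 (phi f : G) x :
  hdot (phi x) (M f x) = \sum_(y <- NS x) (b x y)%:C%C * hdot (phi x) (f x)
     - \sum_(y <- NS x) (b x y)%:C%C * hdot (phi x) (Phi x y *m f y)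
     + hdot (phi x) (W x *m f x).
Proof.
rewrite MopE hdotDr hdot_sumr -sumrB; congr (_ + _); apply: eq_bigr => y _.
by rewrite hdotZr hdotBr mulrBr.
Qed.

Lemma swap_seq (V : nmodType) (r1 r2 : seq X) (F : X -> V) : uniq r1 -> uniq r2 ->
  (forall i, i \notin r1 -> F i = 0) -> (forall i, i \notin r2 -> F i = 0) ->
  \sum_(i <- r1) F i = \sum_(i <- r2) F i.
Proof. by move=> u1 u2 F1 F2; rewrite -(@fsumT _ _ r1) // (@fsumT _ _ r2). Qed.

Section Phi.
Variable phi : G.
Hypothesis fphi : fin_supp phi.

Definition Sp : seq X := finmap.enum_fset (fset_set [set x | phi x != 0]).

Lemma memSp x : (x \in Sp) = (phi x != 0).
Proof.
have := in_fset_set fphi x => /= ->.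
by apply/idP/idP; rewrite ?mem_setE ?inE //=.
Qed.

Lemma phi0 x : x \notin Sp -> phi x = 0.
Proof. by rewrite memSp negbK => /eqP. Qed.

Definition Uphi : seq X := undup (Sp ++ flatten [seq NS y | y <- Sp]).

Lemma SpU x : x \in Sp -> x \in Uphi.
Proof. by move=> xS; rewrite mem_undup mem_cat xS. Qed.

Lemma NSU x y : x \in Sp -> y \in NS x -> y \in Uphi.
Proof.
move=> xS yN; rewrite mem_undup mem_cat; apply/orP; right.
by apply/flatten_mapP; exists x.
Qed.

Lemma Mphi0 x : x \notin Uphi -> M phi x = 0.
Proof.
move=> xU.
have xS : x \notin Sp by apply: contra xU; exact: SpU.
rewrite MopE phi0 // mulmx0 addr0 big1_seq // => y /andP[_ yN].
have -> : phi y = 0.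
  apply: phi0; apply: contra xU => yS; apply: (@NSU y x yS).
  by rewrite memNS bsym -memNS.
by rewrite mulmx0 subr0 scaler0.
Qed.

Lemma fin_Mphi : fin_supp (M phi).
Proof.
apply: (@sub_finite_set _ _ [set` Uphi]); last exact: finite_seq.
move=> x /= Hx; apply/negPn; apply: contra Hx => xU.
by rewrite Mphi0.
Qed.

Lemma duality (f : G) : pairing (M phi) f = pairing phi (M f).
Proof.
rewrite /pairing (@fsumT _ _ Uphi _ (undup_uniq _)); last first.
  by move=> x /Mphi0 ->; rewrite hdot0l.
rewrite (@fsumT _ _ Uphi _ (undup_uniq _)); last first.
  move=> x xU; rewrite phi0 ?hdot0l //; apply: contra xU; exact: SpU.
under eq_bigr do rewrite hdotM_pt.
under [RHS]eq_bigr do rewrite hdotM_pt2.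
rewrite !big_split /= !sumrN; congr (_ + - _ + _).
transitivity (\sum_(x <- Uphi) \sum_(y <- Uphi) (b x y)%:C%C * hdot (phi y) (Phi y x *m f x)).
  apply: eq_bigr => x _; apply: swap_seq; [exact: uniqNS|exact: undup_uniq| |].
    by move=> y /bNS ->; rewrite c0 mul0r.
  move=> y yU; rewrite phi0 ?hdot0l ?mulr0 //; apply: contra yU; exact: SpU.
transitivity (\sum_(x <- Uphi) \sum_(y <- Uphi) (b x y)%:C%C * hdot (phi x) (Phi x y *m f y)); last first.
  apply: eq_bigr => x _; apply: swap_seq; [exact: undup_uniq|exact: uniqNS| |]; last first.
    by move=> y /bNS ->; rewrite c0 mul0r.
  move=> y yU; have [xS|xS] := boolP (x \in Sp).
    rewrite bNS ?c0 ?mul0r //; apply: contra yU; exact: NSU.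
  by rewrite phi0 // hdot0l mulr0.
rewrite exchange_big /=; apply: eq_bigr => y _; apply: eq_bigr => x _.
by rewrite bsym.
Qed.

End Phi.

Lemma pairing_pos (psi : G) : fin_supp psi -> pairing psi psi = 0 -> psi = (fun _ => 0).
Proof.
move=> fp H.
rewrite /pairing (@fsumT _ _ (Sp psi) _ (finmap.fset_uniq _)) in H; last first.
  by move=> x /(@phi0 psi fp x) ->; rewrite hdot0l.
apply: functional_extensionality_dep => x.
have [xS|xS] := boolP (x \in Sp psi); last by rewrite (@phi0 psi fp x).
move: H => /eqP; rewrite psumr_eq0 => [/allP/(_ x xS)/implyP/(_ isT)/eqP/hdot_eq0 //|y _].
exact: hdot_ge0.
Qed.

Lemma surj_inj : (forall g : G, exists f : G, M f = g) ->
  forall phi : G, fin_supp phi -> M phi = (fun x => 0) -> phi = (fun x => 0).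
Proof.
move=> S phi fphi Mphi0; have [f Mf] := S phi.
apply: (@pairing_pos phi fphi).
rewrite -{2}Mf -(@duality phi fphi f) Mphi0 /pairing fsbig1 // => x _.
exact: hdot0l.
Qed.

Definition Cty : countType := {x : X & 'I_(n x)}.

Definition mk (u : Cty -> K) : G :=
  fun x => \col_(a < n x) u (Tagged (fun x => 'I_(n x)) a).

Definition crd (f : G) : Cty -> K := fun c => f (tag c) (tagged c) 0.

Lemma mkK f : mk (crd f) = f.
Proof.
apply: functional_extensionality_dep => x; apply/matrixP => a j.
by rewrite (ord1 j) mxE.
Qed.

Definition lam (e : Cty) (u : Cty -> K) : K := M (mk u) (tag e) (tagged e) 0.

Lemma Mlin (f1 f2 : G) s : M (fun x => f1 x + s *: f2 x) = fun x => M f1 x + s *: M f2 x.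
Proof.
apply: functional_extensionality_dep => x; rewrite !MopE.
have E1 : forall y, (b x y)%:C%C *: ((f1 x + s *: f2 x) - Phi x y *m (f1 y + s *: f2 y)) =
   (b x y)%:C%C *: (f1 x - Phi x y *m f1 y) + s *: ((b x y)%:C%C *: (f2 x - Phi x y *m f2 y)).
  move=> y; rewrite mulmxDr -scalemxAr scalerA mulrC -scalerA -scalerDr; congr (_ *: _).
  by rewrite scalerBr opprD addrACA.
rewrite (eq_bigr _ (fun y _ => E1 y)) big_split -scaler_sumr mulmxDr -scalemxAr scalerDr.
by rewrite addrACA.
Qed.

Lemma mk_lin u v s : mk (fun c => u c + s * v c) = fun x => mk u x + s *: mk v x.
Proof.
apply: functional_extensionality_dep => x; apply/matrixP => a j.
by rewrite !mxE.
Qed.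

Lemma lam_lin e u v s : lam e (fun c => u c + s * v c) = lam e u + s * lam e v.
Proof. by rewrite /lam mk_lin Mlin !mxE. Qed.

Lemma lam_loc e : exists D : seq Cty, forall u v,
  (forall c, c \in D -> u c = v c) -> lam e u = lam e v.
Proof.
exists [seq Tagged (fun x => 'I_(n x)) a | y <- tag e :: NS (tag e), a <- index_enum 'I_(n y)].
move=> u v H; rewrite /lam.
have Emk : forall y, y \in tag e :: NS (tag e) -> mk u y = mk v y.
  move=> y yN; apply/matrixP => a j; rewrite !mxE; apply: H.
  exact: (allpairs_f_dep (fun y (a : 'I_(n y)) => Tagged (fun x => 'I_(n x)) a) yN (mem_index_enum a)).
suff -> : M (mk u) (tag e) = M (mk v) (tag e) by [].
rewrite !MopE (Emk (tag e) (mem_head _ _)); congr (_ + _).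
apply: eq_big_seq => y yN; rewrite (Emk y) // inE yN orbT //.
Qed.


Section Nondeg.
Variables (es : seq Cty) (cf : Cty -> K).
Hypothesis ues : uniq es.

Definition phic : G := fun x =>
  \col_(a < n x) (if Tagged (fun x => 'I_(n x)) a \in es
                  then Num.conj (cf (Tagged (fun x => 'I_(n x)) a)) else 0).

Definition Uphi' : seq X := undup [seq tag e | e <- es].

Lemma phic0 x : x \notin Uphi' -> phic x = 0.
Proof.
move=> xU; apply/matrixP => a j; rewrite !mxE.
case: ifP => // H; case/negP: xU; rewrite mem_undup.
exact: (map_f (@tag X (fun x => 'I_(n x))) H).
Qed.

Lemma fin_phic : fin_supp phic.
Proof.
apply: (@sub_finite_set _ _ [set` Uphi']); last exact: finite_seq.
move=> x /= Hx; apply/negPn; apply: contra Hx => xU.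
by rewrite phic0.
Qed.

Lemma pairing_key (f : G) : pairing phic f = \sum_(e <- es) cf e * crd f e.
Proof.
rewrite /pairing (@fsumT _ _ Uphi' _ (undup_uniq _)); last first.
  by move=> x /phic0 ->; rewrite hdot0l.
pose L := [seq Tagged (fun x => 'I_(n x)) a | x <- Uphi', a <- index_enum 'I_(n x)].
pose F := fun c : Cty => if c \in es then cf c * crd f c else 0.
transitivity (\sum_(c <- L) F c).
  rewrite big_allpairs_dep; apply: eq_bigr => x _.
  rewrite /hdot; apply: eq_bigr => a _; rewrite /F mxE /crd /=.
  by case: ifP => _; rewrite ?conjCK // rmorph0 mul0r.
rewrite /F -big_mkcond -big_filter; apply: perm_big.
apply: uniq_perm => //.
  apply: filter_uniq; apply: allpairs_uniq_dep.
  - exact: undup_uniq.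
  - by move=> x _; exact: index_enum_uniq.
  - by move=> [x1 a1] [x2 a2] _ _.
move=> [x a]; rewrite mem_filter; apply/andP/idP => [[]//|H]; split => //.
apply: (allpairs_f_dep (fun y (a : 'I_(n y)) => Tagged (fun x => 'I_(n x)) a)).
  by rewrite mem_undup; exact: (map_f (@tag X (fun x => 'I_(n x))) H).
exact: mem_index_enum.
Qed.

End Nondeg.

Lemma lam_nondeg
  (Inj : forall phi : G, fin_supp phi -> M phi = (fun x => 0) -> phi = (fun x => 0))
  (es : seq Cty) : uniq es -> forall cf : Cty -> K,
  (forall u, \sum_(e <- es) cf e * lam e u = 0) -> forall e, e \in es -> cf e = 0.
Proof.
move=> ues cf Hs e ees.
have P0 : forall f : G, pairing (phic es cf) (M f) = 0.
  by move=> f; rewrite (@pairing_key es cf ues (M f)) -[in RHS](Hs (crd f)) /lam mkK.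
have fp := fin_phic es cf.
have MP : M (phic es cf) = (fun x => 0).
  apply: (@pairing_pos (M (phic es cf)) (@fin_Mphi _ fp)).
  by rewrite (@duality _ fp) P0.
case: e ees => x a ees.
have := Inj _ fp MP => /(congr1 (fun p : G => p x)) /matrixP /(_ a 0).
by rewrite /phic !mxE ees => /eqP; rewrite conjC_eq0 => /eqP.
Qed.

Lemma inj_surj
  (Inj : forall phi : G, fin_supp phi -> M phi = (fun x => 0) -> phi = (fun x => 0)) :
  forall g : G, exists f : G, M f = g.
Proof.
move=> g.
have [u Hu] := @abstract_surj K Cty Cty lam lam_lin lam_loc (lam_nondeg Inj) (crd g).
exists (mk u); apply: functional_extensionality_dep => x; apply/matrixP => a j.
rewrite (ord1 j); exact: (Hu (Tagged (fun x => 'I_(n x)) a)).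
Qed.

End Concrete.

Theorem lemma4p2 (R : realType) (X : countType) (n : X -> nat)
  (b : X -> X -> R) (Phi : forall x y : X, 'M[R[i]]_(n x, n y))
  (W : forall x : X, 'M[R[i]]_(n x)) :
  weighted_graph b -> locally_finite b ->
  connection Phi -> selfadjoint_endo W ->
  let M := Mop b Phi W in
  continuous M /\
  (forall phi : Gamma R n, fin_supp phi ->
     fin_supp (M phi) /\ (forall f : Gamma R n, pairing (M phi) f = pairing phi (M f))) /\
  ((forall g : Gamma R n, exists f : Gamma R n, M f = g) <->
   (forall phi : Gamma R n, fin_supp phi -> M phi = (fun x => 0) -> phi = (fun x => 0))).
Proof.
move=> wg lf con sa M.
split; first exact: (@M_cont R X n b Phi W wg lf).
split.
  move=> phi fphi; split; first exact: (@fin_Mphi R X n b Phi W wg lf phi fphi).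
  move=> f; exact: (@duality R X n b Phi W wg lf con sa phi fphi f).
split; first exact: (@surj_inj R X n b Phi W wg lf con sa).
exact: (@inj_surj R X n b Phi W wg lf con sa).
Qed.
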